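(* Let $n\ge 1$, let $A\in\mathbb{R}^{n\times n}$ be symmetric positive definite with rows $a_1^\top,\dots,a_n^\top$, let $b\in\mathbb{R}^n$, let $L=\lambda_{\max}(A)$ and let $\gamma>0$. For $x\in\mathbb{R}^n$ form the $n+2$ tokens (row vectors in $\mathbb{R}^{2n+1}$) $$\tilde a_i^\top=[a_i^\top\ \ e_i^\top\ \ 0]\ (i=1,\dots,n),\qquad \tilde b^\top=[0_n^\top\ \ b^\top\ \ 1],\qquad \tilde x^\top=[x^\top\ \ 0_n^\top\ \ 1],$$ where $e_i$ are the standard basis vectors of $\mathbb{R}^n$. Then there exist fixed matrices $W_Q,W_K\in\mathbb{R}^{(2n+1)\times(n+1)}$ and $W_V\in\mathbb{R}^{(2n+1)\times n}$, not depending on $A$, $b$ or $x$, such that the output of the single linear-attention head with these weights, evaluated at the $x$-token, equals $Ax+b$. Consequently, applying this head followed by a residual connection on the $x$-token with post-map $-\gamma I_n$ maps $x_k$ to $x_{k+1}=x_k-\gamma(Ax_k+b)$. Moreover, if $0<\gamma<2/L$, then for any $x_0\in\mathbb{R}^n$ the iterates $x_k$ produced by repeating this step converge linearly to $x^\star=-A^{-1}b$, the minimizer of $\tfrac12 x^\top Ax+b^\top x$.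
   Context: A single linear-attention head with weights $W_Q,W_K,W_V$ acts on a sequence of tokens $z_1,\dots,z_N$ (row vectors) by producing at token $j$ the output $o_j=\sum_{i=1}^N\langle z_jW_Q,\,z_iW_K\rangle\, z_iW_V$ (no softmax). A residual connection with post-map $P$ on a token $z$ whose first $n$ coordinates hold $x$ replaces $x$ by $x+P\,o$ where $o$ is the head output at that token. *)

(* Defs.v *)
(* Vectors are ROW vectors 'rV[R]_d (as in the paper's tokens);
   a column vector v of the paper corresponds to the row v^T here, so
   "A x" is written  x *m A^T  and  "A^{-1} b"  is written  b *m (invmx A)^T. *)
From HB Require Import structures.
From mathcomp Require Import all_boot all_order all_algebra.
From mathcomp Require Import reals.
Set Implicit Arguments. Unset Strict Implicit. Unset Printing Implicit Defensive.
Import Order.TTheory GRing.Theory Num.Theory.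
Local Open Scope ring_scope.

Section Defs.
Variable R : realType.

Definition dotr (d : nat) (u v : 'rV[R]_d) : R := (u *m v^T) 0 0.
Definition enorm (d : nat) (v : 'rV[R]_d) : R := Num.sqrt (dotr v v).

Definition spd (n : nat) (A : 'M[R]_n) : Prop :=
  A^T = A /\ forall v : 'rV[R]_n, v != 0 -> 0 < (v *m A *m v^T) 0 0.

Definition is_lambda_max (n : nat) (A : 'M[R]_n) (L : R) : Prop :=
  eigenvalue A L /\ forall a : R, eigenvalue A a -> a <= L.

Definition linattn (N d p q : nat) (WQ WK : 'M[R]_(d, p)) (WV : 'M[R]_(d, q))
  (Z : 'M[R]_(N, d)) (j : 'I_N) : 'rV[R]_q :=
  \sum_(i < N) dotr (row j Z *m WQ) (row i Z *m WK) *: (row i Z *m WV).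

(* The n+2 tokens in R^{2n+1}, as rows of a matrix:
   rows 0..n-1 : [a_i^T  e_i^T  0],  row n : [0  b^T  1],  row n+1 : [x^T  0  1]. *)
Definition tokens (n : nat) (A : 'M[R]_n) (b x : 'rV[R]_n) : 'M[R]_(n + (1 + 1), n + n + 1) :=
  col_mx (row_mx (row_mx A 1%:M) 0)
         (col_mx (row_mx (row_mx 0 b) 1%:M) (row_mx (row_mx x 0) 1%:M)).

Definition xtok (n : nat) : 'I_(n + (1 + 1)) := rshift n (rshift 1 ord0).

Definition tf_step (n p : nat) (WQ WK : 'M[R]_(n + n + 1, p)) (WV : 'M[R]_(n + n + 1, n))
  (P : 'M[R]_n) (A : 'M[R]_n) (b : 'rV[R]_n) (x : 'rV[R]_n) : 'rV[R]_n :=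
  x + linattn WQ WK WV (tokens A b x) (xtok n) *m P^T.

Definition quadf (n : nat) (A : 'M[R]_n) (b y : 'rV[R]_n) : R :=
  (y *m A *m y^T) 0 0 / 2 + dotr b y.

End Defs.

(* Main.v *)
Require Import Defs.
From HB Require Import structures.
From mathcomp Require Import all_boot all_order all_algebra.
From mathcomp Require Import reals.
From mathcomp Require Import ring lra.
From mathcomp Require Import classical_sets boolp topology normedtype derive.
Import Order.TTheory GRing.Theory Num.Theory.
Import numFieldNormedType.Exports.
Local Open Scope ring_scope.

Section P1.
Variable R : realType.
Variable n : nat.

Definition Pm : 'M[R]_(n, n.+1) := \matrix_(i, j) ((i : nat) == j)%:R.
Definition Qm : 'M[R]_(1, n.+1) := \matrix_(i, j) ((j : nat) == n)%:R.
Definition WQ : 'M[R]_(n + n + 1, n.+1) := col_mx (col_mx Pm 0) Qm.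
Definition WV : 'M[R]_(n + n + 1, n) := col_mx (col_mx 0 1%:M) 0.

Lemma PPt : Pm *m Pm^T = 1%:M.
Proof.
apply/matrixP => i j; rewrite !mxE.
rewrite (bigD1 (widen_ord (leqnSn n) i)) //= big1.
  by rewrite !mxE /= eqxx mul1r addr0 eq_sym.
move=> k /eqP hk; rewrite !mxE.
case: eqP => [e|]; last by rewrite mul0r.
by exfalso; apply: hk; apply: val_inj; rewrite /= e.

Qed.

Lemma QPt : Qm *m Pm^T = 0.
Proof.
apply/matrixP => i j; rewrite !mxE big1 // => k _; rewrite !mxE.
case: eqP => [e|]; last by rewrite mul0r.
case: eqP => [e'|]; last by rewrite mulr0.
by have := ltn_ord j; rewrite e' e ltnn.

Qed.

Lemma QQt : Qm *m Qm^T = 1%:M.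
Proof.
apply/matrixP => i j; rewrite !ord1 !mxE.
rewrite (bigD1 ord_max) //= big1.
  by rewrite !mxE /= eqxx mul1r addr0.
move=> k /eqP hk; rewrite !mxE.
case: eqP => [e|]; last by rewrite mul0r.
by exfalso; apply: hk; apply: val_inj; rewrite /= e.

Qed.

Lemma row1mx k (A : 'M[R]_(1, k)) i : row i A = A.
Proof. by apply/matrixP => a b; rewrite !ord1 mxE. Qed.

Lemma part1 (A : 'M[R]_n) (b x : 'rV[R]_n) :
  linattn WQ WQ WV (tokens A b x) (xtok n) = x *m A^T + b.
Proof.
rewrite /linattn /tokens /xtok rowKd rowKd row1mx.
rewrite big_split_ord /= big_split_ord /= !big_ord1.
rewrite rowKd rowKu row1mx rowKd rowKd row1mx.
rewrite /WQ /WV !mul_row_col !mul0mx !mulmx0 !mul1mx !add0r !addr0 !mulmx1.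
rewrite scaler0 addr0.
have -> : dotr (x *m Pm + Qm) Qm = 1.
  have PQt : Pm *m Qm^T = 0 by rewrite -[Pm]trmxK -trmx_mul QPt trmx0.
  by rewrite /dotr mulmxDl -mulmxA PQt mulmx0 add0r QQt mxE.
rewrite scale1r; congr (_ + _).
rewrite -[RHS]mulmx1 [RHS]mulmx_sum_row; apply: eq_bigr => i _.
rewrite rowKu !row_row_mx row0 !mul_row_col !mul0mx !mulmx0 !addr0 add0r mulmx1.
congr (_ *: _).
rewrite /dotr trmx_mul mulmxDl !mulmxA -(mulmxA x) PPt mulmx1 QPt mul0mx addr0.
by rewrite !mxE; apply: eq_bigr => j _; rewrite !mxE.

Qed.
End P1.

Section P3.
Variable R : realType.
Variable n : nat.

Lemma sum_continuous (k : nat) (F : 'I_k -> 'rV[R]_n -> R) :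
  (forall i, continuous (F i)) -> continuous (fun v => \sum_(i < k) F i v).
Proof.
move=> hF.
suff H : forall s : seq 'I_k, continuous (fun v => \sum_(i <- s) F i v).
  exact: H.
elim=> [|a s IH].
  under eq_fun do rewrite big_nil; exact: cst_continuous.
under eq_fun do rewrite big_cons.
by move=> v; apply: continuousD; [exact: hF | exact: IH].
Qed.

Lemma qform_continuous (B : 'M[R]_n) :
  continuous (fun v : 'rV[R]_n => (v *m B *m v^T) 0 0).
Proof.
have E : (fun v : 'rV[R]_n => (v *m B *m v^T) 0 0) =
  (fun v => \sum_(j < n) (\sum_(i < n) v 0 i * B i j) * v 0 j).
  apply: funext => v; rewrite mxE; apply: eq_bigr => j _; rewrite !mxE.
  by congr (_ * _); apply: eq_bigr => i _; rewrite mxE.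
rewrite E; apply: sum_continuous => j v; apply: continuousM.
  have h : continuous (fun w : 'rV[R]_n => \sum_(i < n) w 0 i * B i j).
    apply: (@sum_continuous n (fun i (w : 'rV[R]_n) => w 0 i * B i j)) => i w.
    apply: continuousM; first exact: coord_continuous.
    exact: cst_continuous.
  exact: h.
exact: coord_continuous.
Qed.

Definition sphere : set 'rV[R]_n := [set v | dotr v v = 1].

Lemma sphere_compact : compact sphere.
Proof.
apply: (@subclosed_compact _ _ [set v : 'rV[R]_n | forall i, `[-1, 1]%classic (v ord0 i)]).
- apply: (@preimage_closed _ _ (fun v : 'rV[R]_n => dotr v v) [set 1]).
    move=> v _; have := qform_continuous 1%:M.
    by rewrite /dotr; under eq_fun do rewrite mulmx1; apply.
  exact: closed_eq.
- have := @rV_compact R n (fun=> `[-1, 1]%classic) (fun=> @segment_compact _ _ _). exact.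
- move=> v; rewrite /sphere /dotr /= mxE => h i.
  have hi : v 0 i * v 0 i <= 1.
    rewrite -h (bigD1 i) //= mxE lerDl.
    by apply: sumr_ge0 => j _; rewrite mxE -expr2 sqr_ge0.
  rewrite in_itv /=; apply/andP; split; nra.
Qed.
End P3.

Section Alg.
Local Open Scope classical_set_scope.
Variable R : realType.
Variable n : nat.
Implicit Types (u v w : 'rV[R]_n) (B : 'M[R]_n).

Definition qf B v := (v *m B *m v^T) 0 0.

Lemma dotr_ge0 v : 0 <= dotr v v.
Proof. by rewrite /dotr mxE; apply: sumr_ge0 => j _; rewrite mxE -expr2 sqr_ge0. Qed.

Lemma dotr_eq0 v : dotr v v = 0 -> v = 0.
Proof.
rewrite /dotr mxE => h; apply/rowP => j; rewrite mxE.
have H : forall k : 'I_n, true -> 0 <= v 0 k * v^T k 0.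
  by move=> k _; rewrite mxE -expr2 sqr_ge0.
have := psumr_eq0P H h; move=> /(_ j isT).
by rewrite mxE => /eqP; rewrite mulf_eq0 orbb => /eqP.
Qed.

Lemma dotrC u v : dotr u v = dotr v u.
Proof. by rewrite /dotr -[u *m v^T]trmxK trmx_mul trmxK mxE. Qed.

Lemma qf_dotr v : qf 1%:M v = dotr v v.
Proof. by rewrite /qf mulmx1. Qed.

Lemma qfZ B c v : qf B (c *: v) = c ^+ 2 * qf B v.
Proof.
by rewrite /qf linearZ /= -scalemxAl -scalemxAr -scalemxAl !mxE mulrA expr2.
Qed.

Lemma qfMt (M : 'M[R]_n) v : qf (M *m M^T) v = dotr (v *m M) (v *m M).
Proof. by rewrite /qf /dotr trmx_mul !mulmxA. Qed.

Lemma qf_split B v w (s : R) : B^T = B ->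
  qf B (v + s *: w) = qf B v + 2 * s * (v *m B *m w^T) 0 0 + s ^+ 2 * qf B w.
Proof.
move=> hB.
have hsym : (w *m B *m v^T) 0 0 = (v *m B *m w^T) 0 0.
  have E : (w *m B *m v^T) 0 0 = ((w *m B *m v^T)^T) 0 0.
    by rewrite [RHS]mxE.
  rewrite E.
  by rewrite !trmx_mul trmxK hB mulmxA.
have tD : (v + s *: w)^T = v^T + s *: w^T.
  by rewrite linearD /= linearZ.
rewrite /qf tD !mulmxDl !mulmxDr -!scalemxAl -!scalemxAr.
rewrite !mxE in hsym; rewrite !mxE hsym; ring.
Qed.


Lemma qf0 B : qf B 0 = 0.
Proof. by rewrite /qf mul0mx mul0mx mxE. Qed.

Lemma lagrange (N : 'M[R]_n) v0 : N^T = N -> (forall v, qf N v <= 0) ->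
  qf N v0 = 0 -> v0 *m N = 0.
Proof.
move=> hN hle h0; set w := v0 *m N.
set c := (v0 *m N *m w^T) 0 0.
have hc : c = dotr w w by [].
set g := qf N w.
have hg : g <= 0 by exact: hle.
have key : forall s : R, 2 * s * c + s ^+ 2 * g <= 0.
  by move=> s; have := hle (v0 + s *: w); rewrite qf_split // h0 add0r.
have c0 : 0 <= c by rewrite hc dotr_ge0.
have := key (c / (1 - g)).
set s := c / (1 - g).
have hs : s * (1 - g) = c by rewrite /s mulfVK // subr_eq0; apply/eqP => e; move: hg; rewrite -e; lra.
move=> k.
have cz : c = 0.
  have : s ^+ 2 * (2 - g) <= 0 by rewrite -hs in k; nra.
  have s0 : s = 0 by nra.
  by rewrite -hs s0 mul0r.
by apply: dotr_eq0; rewrite -hc.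
Qed.


Lemma qf_max (B : 'M[R]_n) : (0 < n)%N ->
  exists v0, dotr v0 v0 = 1 /\ forall v, qf B v <= qf B v0 * dotr v v.
Proof.
move=> hn.
have ne : (sphere R n !=set0)%classic.
  exists (\row_j ((j : nat) == 0%N)%:R); rewrite /sphere /= /dotr mxE.
  rewrite (bigD1 (Ordinal hn)) //= big1 ?addr0; first by rewrite !mxE /= mulr1.
  move=> j /eqP hj; rewrite !mxE.
  case: eqP => [e|]; last by rewrite mul0r.
  by exfalso; apply: hj; apply: val_inj.
have cB : {within sphere R n, continuous (qf B)}.
  apply: continuous_subspaceT => v; exact: qform_continuous.
have [c cS cmax] := EVT_max_rV ne (@sphere_compact R n) cB.
exists c; split; first by move: cS; rewrite inE.
move=> v; case: (eqVneq v 0) => [->|nz]; first by rewrite qf0 /dotr mul0mx mxE mulr0.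
set d := dotr v v.
have d0 : 0 < d.
  rewrite lt_def dotr_ge0 andbT; apply/eqP => e; move/eqP: nz; apply; exact: dotr_eq0.
set t := Num.sqrt d.
have t0 : 0 < t by rewrite sqrtr_gt0.
have tt : t ^+ 2 = d by rewrite sqr_sqrtr // ltW.
have wS : (t^-1 *: v) \in sphere R n.
  by rewrite inE /sphere /= -qf_dotr qfZ qf_dotr -/d -tt exprVn mulVf // expf_neq0 // gt_eqF.
have := cmax _ wS; rewrite qfZ exprVn tt => h.
have -> : qf B v = d * (d^-1 * qf B v) by rewrite mulrA mulfV ?mul1r // gt_eqF.
by rewrite mulrC ler_wpM2r // ltW.
Qed.


Lemma qfB B1 B2 c v : qf (B1 - c *: B2) v = qf B1 v - c * qf B2 v.
Proof. by rewrite /qf mulmxBr mulmxBl -scalemxAr -scalemxAl !mxE. Qed.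

Lemma qf_ge0 (A : 'M[R]_n) v : spd A -> 0 <= qf A v.
Proof.
move=> [_ hpd]; case: (eqVneq v 0) => [->|nz]; first by rewrite qf0.
exact/ltW/hpd.
Qed.

Lemma unit_spd (A : 'M[R]_n) : spd A -> A \in unitmx.
Proof.
move=> [hs hpd]; rewrite -row_free_unit -kermx_eq0; apply/negP => hk.
set u := nz_row (kermx A).
have unz : u != 0 by rewrite nz_row_eq0; apply/negP.
have : u *m A = 0 by apply/sub_kermxP; exact: nz_row_sub.
by move=> e; have := hpd u unz; rewrite e mul0mx mxE ltxx.
Qed.

Lemma part3 (A : 'M[R]_n) (b : 'rV[R]_n) (L gamma : R) (F : 'rV[R]_n -> 'rV[R]_n) :
  (0 < n)%N -> spd A -> is_lambda_max A L -> 0 < gamma -> gamma < 2 / L ->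
  (forall y, F y = y - gamma *: (y *m A^T + b)) ->
  let xstar := - (b *m (invmx A)^T) in
  (forall y, quadf A b xstar <= quadf A b y) /\
  exists rho : R, 0 <= rho /\ rho < 1 /\
    forall x0 k, enorm (iter k F x0 - xstar) <= rho ^+ k * enorm (x0 - xstar).
Proof.
move=> hn hA [_ hL] g0 gL hF xstar.
have hu := unit_spd A hA.
have hsym : A^T = A by case: hA.
have hxs : xstar *m A = - b.
  have h : xstar *m A^T = - b.
    by rewrite /xstar mulNmx -mulmxA -trmx_mul mulmxV // trmx1 mulmx1.
  by rewrite hsym in h.
split.
  move=> y; set d := y - xstar.
  have yE : y = xstar + 1 *: d by rewrite scale1r /d addrC subrK.
  have qE : forall z, quadf A b z = qf A z / 2 + dotr b z by [].
  rewrite !qE yE qf_split // hxs /dotr.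
  have -> : (b *m (xstar + 1 *: d)^T) = b *m xstar^T + b *m d^T.
    by rewrite scale1r linearD /= mulmxDr.
  have := qf_ge0 A d hA.
  by rewrite mulNmx !mxE => h; lra.
set M := 1%:M - gamma *: A.
have hMt : M^T = M by rewrite /M linearD /= linearN /= linearZ /= trmx1 hsym.
set B := M *m M^T.
have [v0 [hv0 hmax]] := qf_max B hn.
set m := qf B v0.
have m0 : 0 <= m by rewrite /m /B qfMt dotr_ge0.
have hBt : B^T = B by rewrite /B trmx_mul trmxK.
have hv0B : v0 *m B = m *: v0.
  have h : v0 *m (B - m *: 1%:M) = 0.
    apply: lagrange.
    - by rewrite linearD /= linearN /= linearZ /= trmx1 hBt.
    - by move=> v; rewrite qfB qf_dotr subr_le0 hmax.
    - by rewrite qfB qf_dotr hv0 mulr1 subrr.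
  by move: h; rewrite mulmxBr -scalemxAr mulmx1 => /eqP; rewrite subr_eq0 => /eqP.
set r := Num.sqrt m.
have r0 : 0 <= r by rewrite sqrtr_ge0.
have rr : r ^+ 2 = m by rewrite sqr_sqrtr.
have v0nz : v0 != 0.
  by apply/eqP => e; move: hv0; rewrite e /dotr mul0mx mxE => /eqP; rewrite eq_sym oner_eq0.
have hMA : forall u, u *m M = u - gamma *: (u *m A).
  by move=> u; rewrite /M mulmxBr mulmx1 -scalemxAr.
have r1 : r < 1.
  set u := v0 *m M - r *: v0.
  have hu0 : u *m M = - (r *: u).
    apply/eqP; rewrite -subr_eq0 opprK /u mulmxBl -scalemxAl -mulmxA.
    have -> : M *m M = B by rewrite /B hMt.
    rewrite hv0B scalerBr scalerA -expr2 rr.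
    by rewrite addrA subrK subrr.
  case: (eqVneq u 0) => [e|unz].
    have e1 : gamma *: (v0 *m A) = (1 - r) *: v0.
      move/eqP: e; rewrite /u subr_eq0 hMA => /eqP e.
      by apply/eqP; rewrite scalerBl scale1r -e opprB addrC subrK.
    have hq : gamma * qf A v0 = 1 - r.
      have scE : forall (c : R) (X : 'M[R]_1), (c *: X) 0 0 = c * X 0 0.
        by move=> c X; rewrite mxE.
      have := congr1 (fun X => (X *m v0^T) 0 0) e1 => /=.
      by rewrite -!scalemxAl !scE -/(qf A v0) -/(dotr v0 v0) hv0 mulr1.
    have := (proj2 hA) v0 v0nz; rewrite -/(qf A v0) => hp.
    nra.
  have ea : eigenvalue A (gamma^-1 * (1 + r)).
    apply/eigenvalueP; exists u => //.
    have : gamma *: (u *m A) = u - (u *m M) by rewrite hMA opprB addrC subrK.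
    move=> e.
    have e2 : gamma *: (u *m A) = (1 + r) *: u by rewrite e hu0 opprK scalerDl scale1r.
    by rewrite -scalerA -e2 scalerA mulVf ?scale1r // gt_eqF.
  have := hL _ ea.
  set a := gamma^-1 * (1 + r) => haL.
  have ga : gamma * a = 1 + r by rewrite /a mulVKf // gt_eqF.
  have a0 : 0 < a by rewrite /a mulr_gt0 ?invr_gt0 //; lra.
  have L0 : 0 < L by lra.
  have gL2 : gamma * L < 2 by rewrite -ltr_pdivlMr.
  nra.
exists r; split => //; split => //.
have contr : forall v, enorm (v *m M) <= r * enorm v.
  move=> v; rewrite /enorm -sqrtrM // ler_sqrt; last by rewrite mulr_ge0 // dotr_ge0.
  by rewrite -qfMt -/B.
have step : forall y, F y - xstar = (y - xstar) *m M.
  move=> y; rewrite hF hMA mulmxBl hxs hsym opprK.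
  by rewrite opprK addrAC.
move=> x0; elim=> [|k IH]; first by rewrite expr0 mul1r.
rewrite iterS step exprS -mulrA.
by apply: le_trans (contr _) _; rewrite ler_wpM2l.
Qed.
End Alg.

Theorem proposition1 (R : realType) (n : nat) (hn : (0 < n)%N) :
  exists (WQ WK : 'M[R]_(n + n + 1, n.+1)) (WV : 'M[R]_(n + n + 1, n)),
    (* the head output at the x-token is A x + b *)
    (forall (A : 'M[R]_n) (b x : 'rV[R]_n), spd A ->
       linattn WQ WK WV (tokens A b x) (xtok n) = x *m A^T + b)
    /\
    (* head + residual with post-map -gamma I is a gradient step *)
    (forall (A : 'M[R]_n) (b x : 'rV[R]_n) (gamma : R), spd A -> 0 < gamma ->
       tf_step WQ WK WV (- gamma)%:M A b x = x - gamma *: (x *m A^T + b))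
    /\
    (* linear convergence to the minimizer x* = - A^{-1} b *)
    (forall (A : 'M[R]_n) (b : 'rV[R]_n) (L gamma : R),
       spd A -> is_lambda_max A L -> 0 < gamma -> gamma < 2 / L ->
       let xstar := - (b *m (invmx A)^T) in
       (forall y : 'rV[R]_n, quadf A b xstar <= quadf A b y) /\
       exists rho : R, 0 <= rho /\ rho < 1 /\
         forall (x0 : 'rV[R]_n) (k : nat),
           enorm (iter k (tf_step WQ WK WV (- gamma)%:M A b) x0 - xstar)
             <= rho ^+ k * enorm (x0 - xstar)).
Proof.
exists (WQ R n), (WQ R n), (WV R n).
have hstep : forall (A : 'M[R]_n) (b x : 'rV[R]_n) (gamma : R),
    tf_step (WQ R n) (WQ R n) (WV R n) (- gamma)%:M A b x
    = x - gamma *: (x *m A^T + b).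
  by move=> A b x g; rewrite /tf_step part1 tr_scalar_mx mul_mx_scalar scaleNr.
split; first by move=> A b x _; exact: part1.
split; first by move=> A b x g _ _; exact: hstep.
move=> A b L g hA hL g0 gL; apply: (@part3 R n A b L g _ hn hA hL g0 gL).
by move=> y; exact: hstep.
Qed.
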